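(* Let $p$ be an odd prime and $k\ge0$. For every $0\le l<p^k$ and $0\le l'<p^{k+1}$, every path $P\in\mathcal P(V_{1,l})\cup\mathcal P(W_{2,l'})$ has $\mathrm{des}(P)\in\{0,1\}$, and $$\mathcal M_{V_{1,l}}=\mathcal M_{W_{2,l'}}=\frac{p-1}{2}.$$
   Context: Fix an odd prime $p$ and an integer $k\ge 0$. For integers $0\le i<n$ write $\lambda(n,i)=(n-i,1^i)$ for the hook partition of $n$ with $n-i$ boxes in its first row and $i$ further boxes in its first column. If $\mu=\lambda(n',i')$ is obtained from $\lambda(n,i)$ by appending $m=(n'-i')-(n-i)\ge 0$ boxes to the first row and $n''=i'-i\ge 0$ boxes to the first column, we say $\mu$ is obtained by adding the block $B_{m,n''}$ ($m$ horizontal nodes, $n''$ vertical nodes). Put $x_s=p^k(sp-(s+1))$. The relevant part (''column $k$'') of the $p$-Bratteli diagram is the graded directed graph with vertices: on floor $2k+1$, $S_i=\lambda(p^k(p-1),i)$ for $0\le i<p^k(p-1)$; on floor $2(k+s)$ ($s\ge1$), $V_{s,l}=\lambda\big(p^k(2sp-(2s+1)),\,x_s+l\big)$ for $0\le l<p^k$; on floor $2(k+s)-1$ ($s\ge2$), $W_{s,l'}=\lambda\big(p^k((2s-1)p-2s),\,x_{s-1}+l'\big)$ for $0\le l'<p^{k+1}$; and edges, each labelled by the block added: (E1) $S_i\to V_{1,l}$ exactly when $i=p^kt+l$ with $0\le t\le p-2$, block $B_{p^kt,\,p^k(p-2-t)}$; (E2) for $s\ge2$, $0\le l<p^k$, $0\le\beta\le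 p-1$: $V_{s-1,l}\to W_{s,pl+\beta}$, block $B_{p^k(p-1)-((p-1)l+\beta),\,(p-1)l+\beta}$; (E3) for $s\ge 2$, $0\le l'<p^{k+1}$ and $t=\lfloor l'/p^k\rfloor$: $W_{s,l'}\to V_{s,l'-p^kt}$, block $B_{p^kt,\,p^k(p-1-t)}$. A path ending at a vertex $v$ is a sequence of edges starting at some $S_i$ and going up one floor at a time to $v$ ($S_i\to V_{1,\cdot}\to W_{2,\cdot}\to V_{2,\cdot}\to W_{3,\cdot}\to\cdots\to v$); $\mathcal P(v)$ is the set of all paths ending at $v$. The blocks of a path are numbered $B^2,B^3,\dots,B^N$: $B^2$ is the block of the edge leaving $S_i$, and for $j\ge2$, $B^{2j-1}$ is the block of the edge into $W_{j,\cdot}$ and $B^{2j}$ the block of the edge into $V_{j,\cdot}$. Write $B^j=B_{m_j,n_j}$. Descents: $1\in\mathrm{Des}(P)$ iff $m_2=p^kt$ with $0\le t<\frac{p-1}{2}$; $2\notin\mathrm{Des}(P)$; for $3\le j<N$, $j\in\mathrm{Des}(P)$ iff $m_j>m_{j+1}$ and $n_j<n_{j+1}$. $\mathrm{des}(P)=|\mathrm{Des}(P)|$. The $p^k$-Fibonacci number of a vertex $v$ is $\mathcal M_v=\sum_{P\in\mathcal P(v)}\mathrm{des}(P)$. *)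

(* Defs.v *)
From HB Require Import structures.
From mathcomp Require Import all_boot.
Set Implicit Arguments. Unset Strict Implicit. Unset Printing Implicit Defensive.

(* Vertices of column k of the p-Bratteli diagram:
   VS i   = S_i      (floor 2k+1)
   VV s l = V_{s,l}  (floor 2(k+s))
   VW s l = W_{s,l}  (floor 2(k+s)-1) *)
Inductive vtx := VS of nat | VV of nat & nat | VW of nat & nat.

Definition vtx_eq_dec : comparable vtx.
Proof. unfold comparable, decidable; decide equality; apply: eq_comparable. Defined.
HB.instance Definition _ := hasDecEq.Build vtx (compareP vtx_eq_dec).

(* A labelled edge: (source, target, block (m, n)) meaning B_{m,n}. *)
Definition edge := (vtx * vtx * (nat * nat))%type.

Definition is_edge (p k : nat) (u v : vtx) (b : nat * nat) : Prop :=
  match u, v with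
  | VS i, VV s l =>
      s = 1 /\ i < p ^ k * (p - 1) /\ l < p ^ k /\
      exists t, t <= p - 2 /\ i = p ^ k * t + l /\
                b = (p ^ k * t, p ^ k * (p - 2 - t))
  | VV s0 l, VW s l' =>
      2 <= s /\ s0 = s - 1 /\ l < p ^ k /\
      exists beta, beta <= p - 1 /\ l' = p * l + beta /\
                   b = (p ^ k * (p - 1) - ((p - 1) * l + beta), (p - 1) * l + beta)
  | VW s l', VV s' l =>
      2 <= s /\ s' = s /\ l' < p ^ (k + 1) /\
      let t := l' %/ p ^ k in
      l = l' - p ^ k * t /\ b = (p ^ k * t, p ^ k * (p - 1 - t))
  | _, _ => False
  end.

Fixpoint walk (p k : nat) (u : vtx) (es : seq edge) (w : vtx) : Prop :=
  match es with
  | [::] => u = w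
  | e :: es' => e.1.1 = u /\ is_edge p k e.1.1 e.1.2 e.2 /\ walk p k e.1.2 es' w
  end.

Definition is_path (p k : nat) (P : seq edge) (v : vtx) : Prop :=
  exists i, i < p ^ k * (p - 1) /\ walk p k (VS i) P v.

(* Blocks B^2, ..., B^N of a path: B^j = nth (j-2); N = size P + 1. *)
Definition blk (P : seq edge) (j : nat) : nat * nat := nth (0, 0) (map snd P) (j - 2).
Definition mj (P : seq edge) j := (blk P j).1.
Definition nj (P : seq edge) j := (blk P j).2.

(* des(P) = |Des(P)|: 1 in Des iff m_2 = p^k t with 0 <= t < (p-1)/2;
   2 is never in Des; for 3 <= j < N, j in Des iff m_j > m_{j+1} and n_j < n_{j+1}. *)
Definition des (p k : nat) (P : seq edge) : nat :=
  ((0 < size P) && [exists t : 'I_((p - 1) %/ 2), mj P 2 == p ^ k * t])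
  + count (fun j => (mj P j > mj P j.+1) && (nj P j < nj P j.+1))
          (iota 3 (size P + 1 - 3)).

(* "M_v = M": summing des over a duplicate-free enumeration of the (finite) set P(v). *)
Definition fib_is (p k : nat) (v : vtx) (M : nat) : Prop :=
  exists L : seq (seq edge),
    uniq L /\ (forall P, P \in L <-> is_path p k P v) /\ \sum_(P <- L) des p k P = M.

(* Main.v *)
Require Import Defs.
From mathcomp Require Import all_boot.
From mathcomp Require Import zify.
Set Implicit Arguments. Unset Strict Implicit.

Definition level (v : vtx) : nat :=
  match v with VS _ => 0 | VV s _ => 2 * s - 1 | VW s _ => 2 * s - 2 end.

Lemma edge_level p k u v b : is_edge p k u v b -> level v = (level u).+1.
Proof.
case: u => [i|s l|s l]; case: v => [i'|s' l'|s' l'] //=.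
- by move=> [-> _].
- by move=> [h1 [-> _]]; lia.
- by move=> [h1 [-> _]]; lia.
Qed.

Lemma walk_level p k es u w : walk p k u es w -> level w = level u + size es.
Proof.
elim: es u => [|e es IH] u /=; first by move=> ->; rewrite addn0.
move=> [h1 [h2 h3]]; rewrite (IH _ h3) (edge_level h2) h1; lia.
Qed.

Definition edgeV p k t l : edge := (VS (p ^ k * t + l), VV 1 l, (p ^ k * t, p ^ k * (p - 2 - t))).
Definition edgeW p k l' : edge :=
  (VV 1 (l' %/ p), VW 2 l',
   (p ^ k * (p - 1) - ((p - 1) * (l' %/ p) + l' %% p), (p - 1) * (l' %/ p) + l' %% p)).

Lemma des_first p k t x rest : 0 < p ^ k -> size rest <= 1 ->
  des p k ((x, (p ^ k * t, p ^ k * (p - 2 - t))) :: rest) = (t < (p - 1) %/ 2).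
Proof.
move=> pk hs; rewrite /des /=.
idtac.
have -> : (size rest).+1 + 1 - 3 = 0 by lia.
rewrite /= addn0 /mj /blk /=.
congr (nat_of_bool _).
case: ltnP => ht.
  by apply/existsP; exists (Ordinal ht).
apply/negbTE/existsP => -[t0]; rewrite /= => /eqP; move/eqP; rewrite eqn_pmul2l // => /eqP e.
idtac.
by move: (ltn_ord t0); rewrite -e; lia.
Qed.

Lemma sum_lt n m : \sum_(t <- iota 0 n) (t < m : nat) = minn m n.
Proof.
elim: n => [|n IH]; first by rewrite big_nil; lia.
rewrite -addn1 iotaD big_cat /= big_seq1 IH /=; case: ltnP; lia.
Qed.

Theorem mainTheorem2 (p k : nat) (pp : prime p) (podd : odd p) :
  (forall l, l < p ^ k ->
     (forall P, is_path p k P (VV 1 l) -> des p k P \in [:: 0; 1]) /\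
     fib_is p k (VV 1 l) ((p - 1) %/ 2)) /\
  (forall l', l' < p ^ (k + 1) ->
     (forall P, is_path p k P (VW 2 l') -> des p k P \in [:: 0; 1]) /\
     fib_is p k (VW 2 l') ((p - 1) %/ 2)).
Proof.
have p0 : 0 < p := prime_gt0 pp.
have p2 : 2 < p.
  have := prime_gt1 pp; case: p podd {pp p0} => [|[|[|q]]] //.
have pk : 0 < p ^ k by rewrite expn_gt0 p0.
have hd : (p - 1) %/ 2 <= p - 1 by apply: leq_div.
have bin : forall b : bool, (b : nat) \in [:: 0; 1] by case.
split.
- move=> l hl.
  have anV : forall P, is_path p k P (VV 1 l) ->
      exists2 t, t <= p - 2 & P = [:: edgeV p k t l].
    move=> P [i [hi hw]]; have := walk_level hw => /= hs.
    case: P hw hs => [|[[a b] c] [|e P]] //= [-> [he eb]] _; subst b.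
    move: he => /= [_ [_ [_ [t [ht [-> ->]]]]]].
    by exists t.
  split.
    move=> P /anV [t _ ->]; rewrite des_first //; exact: bin.
  exists [seq [:: edgeV p k t l] | t <- iota 0 (p - 1)]; split; [|split].
  + rewrite map_inj_uniq ?iota_uniq // => t t' [].
    by move=> _ /eqP; rewrite eqn_pmul2l // => /eqP.
  + move=> P; split.
      move/mapP => [t]; rewrite mem_iota => /andP [_ ht] ->.
      exists (p ^ k * t + l); split; first nia.
      rewrite /= /edgeV /=; split => //; split => //; split => //; split; first nia.
      split => //; exists t; split => //; lia.
    move/anV => [t ht ->]; apply/mapP; exists t => //; rewrite mem_iota; lia.
  + rewrite big_map (eq_bigr (fun t => (t < (p - 1) %/ 2 : nat))).
      by rewrite sum_lt; apply/minn_idPl.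
    by move=> t _; rewrite /edgeV des_first.
- move=> l' hl'.
  have hl : l' %/ p < p ^ k by rewrite ltn_divLR // -expnSr; move: hl'; rewrite addn1.
  have anW : forall P, is_path p k P (VW 2 l') ->
      exists2 t, t <= p - 2 & P = [:: edgeV p k t (l' %/ p); edgeW p k l'].
    move=> P [i [hi hw]]; have := walk_level hw => /= hs.
    case: P hw hs => [|[[a b] c] [|[[a2 b2] c2] [|e P]]] //= [ea [he [ea2 [he2 eb2]]]] _.
    subst a a2 b2.
    case: b he he2 => [i'|s l|s l] //= [es [_ [_ [t [ht [ei ec]]]]]].
    subst s i c.
    move=> [_ [_ [_ [beta [hb [el' ec2]]]]]]; subst c2.
    have hq : l' %/ p = l.
      by rewrite el' mulnC divnMDl // divn_small ?addn0 //; lia.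
    have hr : l' %% p = beta.
      by rewrite el' mulnC modnMDl modn_small //; lia.
    by exists t => //; rewrite /edgeV /edgeW hq hr.
  split.
    move=> P /anW [t _ ->]; rewrite des_first //; exact: bin.
  exists [seq [:: edgeV p k t (l' %/ p); edgeW p k l'] | t <- iota 0 (p - 1)];
    split; [|split].
  + rewrite map_inj_uniq ?iota_uniq // => t t' [].
    by move=> _ /eqP; rewrite eqn_pmul2l // => /eqP.
  + move=> P; split.
      move/mapP => [t]; rewrite mem_iota => /andP [_ ht] ->.
      exists (p ^ k * t + l' %/ p); split; first nia.
      rewrite /= /edgeV /=; split => //; split.
        split => //; split; first nia.
        split => //; exists t; split => //; lia.
      split => //; split => //; split => //; split => //; split => //.
      exists (l' %% p); split; first by have := ltn_pmod l' p0; lia.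
      split => //; rewrite {1}(divn_eq l' p); lia.
    move/anW => [t ht ->]; apply/mapP; exists t => //; rewrite mem_iota; lia.
  + rewrite big_map (eq_bigr (fun t => (t < (p - 1) %/ 2 : nat))).
      by rewrite sum_lt; apply/minn_idPl.
    by move=> t _; rewrite /edgeV des_first.
Qed.
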